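(* Let $n,k,m\ge1$ be integers, and let $r_0<r_1<\dots<r_{k-1}$ and $s_0<s_1<\dots<s_{k-1}$ be integers in $\{1,\dots,k+m\}$. Let $\bar r_0<\dots<\bar r_{m-1}$ and $\bar s_0<\dots<\bar s_{m-1}$ be the elements of $\{1,\dots,k+m\}\setminus\{r_0,\dots,r_{k-1}\}$ and $\{1,\dots,k+m\}\setminus\{s_0,\dots,s_{k-1}\}$ respectively. Then $$\det\Big(C_{2n-1}^{(2k+2m-1)}(2r_i-2\to2s_j-1)\Big)_{0\le i,j\le k-1}=(-1)^{\sum_{i=0}^{m-1}(\bar r_i+\bar s_i)}\det\Big(C_{-2n+1}^{(2k+2m-1)}(2\bar r_i-2\to2\bar s_j-1)\Big)_{0\le i,j\le m-1}.$$
   Context: For $N\ge0$ and $0\le r,s\le K$, $C_N^{(K)}(r\to s)$ is the number of lattice paths with steps $(1,1),(1,-1)$ from $(0,r)$ to $(N,s)$ never below the $x$-axis nor above $y=K$. For odd $K$, $F(x)=\sum_{N\ge0}C_N^{(K)}(r\to s)x^N$ is a rational function $p/q$ with $\deg p<\deg q$, $q(0)\ne0$, and for negative $N$ one defines $C_N^{(K)}(r\to s)$ by $\sum_{N\ge1}C_{-N}^{(K)}(r\to s)x^N=-F(1/x)$ (equivalently by running the linear recurrence backwards). *)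

(* Defs.v *)
From mathcomp Require Import all_boot all_order all_algebra.
Set Implicit Arguments. Unset Strict Implicit. Unset Printing Implicit Defensive.
Import Order.TTheory GRing.Theory Num.Theory.
Local Open Scope ring_scope.

(* C_N^{(K)}(r -> s) for N >= 0: the number of lattice paths with steps
   (1,1),(1,-1) from (0,r) to (N,s) staying in the strip 0 <= y <= K.
   A path is encoded by its sequence of heights y_0,...,y_N in {0..K}. *)
Definition Cpath (K N r s : nat) : nat :=
  #|[set p : {ffun 'I_N.+1 -> 'I_K.+1} |
     [&& val (p ord0) == r, val (p ord_max) == s &
        [forall i : 'I_N,
           (val (p (lift ord0 i)) == (val (p (widen_ord (leqnSn N) i))).+1)
        || (val (p (widen_ord (leqnSn N) i)) == (val (p (lift ord0 i))).+1)]]]|.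

(* [is_Cneg K r s b] : b N = C_{-N}^{(K)}(r -> s) for all N >= 1 (and b 0 = 0),
   i.e. sum_{N>=1} b N x^N = - F(1/x) where F = p/q, deg p < deg q, q(0) <> 0,
   is the generating function sum_{N>=0} C_N^{(K)}(r->s) x^N.
   With d = deg q, -F(1/x) = - P*(x)/Q*(x) where P*(x) = x^d p(1/x) and
   Q*(x) = x^d q(1/x) are polynomials (Q*(0) = lead coef q <> 0). *)
Definition revcoef (d : nat) (p : {poly rat}) (i : nat) : rat :=
  if (i <= d)%N then p`_(d - i) else 0.

Definition is_Cneg (K r s : nat) (b : nat -> rat) : Prop :=
  exists p q : {poly rat},
    [/\ (size p < size q)%N, q.[0] != 0,
        (forall N : nat,
           \sum_(i < N.+1) q`_i * (Cpath K (N - i) r s)%:R = p`_N) &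
        (forall N : nat,
           \sum_(i < N.+1) revcoef (size q).-1 q i * b (N - i)%N
             = - revcoef (size q).-1 p N)].

(* Main.v *)
Require Import Defs.
From mathcomp Require Import all_boot all_order all_algebra.
From mathcomp Require Import all_fingroup.
From mathcomp Require Import zify.
Set Implicit Arguments. Unset Strict Implicit. Unset Printing Implicit Defensive.
Import Order.TTheory GRing.Theory Num.Theory.

Definition invb n (g : 'I_n -> 'I_n) : bool :=
  \big[addb/false]_(p < n) \big[addb/false]_(q < n) ((p < q) && (g q < g p)).

Lemma bigaddb_pred1 n (a : 'I_n) (v : 'I_n -> bool) :
  \big[addb/false]_(p < n) ((p == a) && v p) = v a.
Proof.
rewrite (bigD1 a) //= eqxx big1 ?addbF // => p /negPf->; by [].
Qed.

Lemma addb_or (a b : bool) : a (+) b = (a && ~~ b) || (~~ a && b).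
Proof. by case: a; case: b. Qed.

Lemma oeq n (a b : 'I_n) : (a == b) = (nat_of_ord a == nat_of_ord b).
Proof. by []. Qed.

Lemma tperm_lt_xor n (i j p q : 'I_n) : val j = (val i).+1 ->
  (tperm i j p < tperm i j q) (+) (p < q)
  = ((p == i) && (q == j)) || ((p == j) && (q == i)).
Proof.
move=> /= hj.
case: tpermP => [->|->|/eqP hpi /eqP hpj]; case: tpermP => [->|->|/eqP hqi /eqP hqj];
  repeat match goal with H : is_true (?a != ?b) |- _ => move: H end;
  rewrite ?oeq /= addb_or; lia.
Qed.

Lemma andb_addl' (a b c : bool) : (a && c) (+) (b && c) = (a (+) b) && c.
Proof. by case: a; case: b; case: c. Qed.

Lemma pw_lemma n (i j p q : 'I_n) (c : 'I_n -> 'I_n -> bool) : i != j ->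
  ((p == i) && (q == j) || (p == j) && (q == i)) && c p q =
  ((q == j) && ((p == i) && c i j)) (+) ((q == i) && ((p == j) && c j i)).
Proof.
move=> nij; have nji : j != i by rewrite eq_sym.
case: (boolP (p == i)) => [/eqP->|hpi]; case: (boolP (q == j)) => [/eqP->|hqj];
case: (boolP (p == j)) => [/eqP hpj|hpj]; case: (boolP (q == i)) => [/eqP hqi|hqi];
rewrite ?eqxx ?(negPf nij) ?(negPf nji) ?(negPf hpi) ?(negPf hqj) ?(negPf hpj) ?(negPf hqi) /= ?addbF //;
 try (by move: nij; rewrite ?hpj ?hqi eqxx);
 by subst.
Qed.

Lemma xor_neg (a b : bool) : a (+) b = true -> a = ~~ b.
Proof. by case: a; case: b. Qed.

Lemma invb_tperm_adj n (s : 'S_n) (i j : 'I_n) : val j = (val i).+1 ->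
  invb (tperm i j * s)%g = ~~ invb s.
Proof.
move=> /= hj.
have nij : i != j by rewrite oeq hj; lia.
rewrite /invb (reindex_inj (@perm_inj _ (tperm i j))).
under eq_bigr => p _ do rewrite (reindex_inj (@perm_inj _ (tperm i j))).
under eq_bigr => p _ do under eq_bigr => q _ do rewrite !permM !tpermK.
apply: xor_neg.
rewrite -big_split /=.
under eq_bigr => p _ do rewrite -big_split /=.
under eq_bigr => p _ do under eq_bigr => q _ do
  rewrite andb_addl' tperm_lt_xor // (pw_lemma _ _ (fun a b => s b < s a) nij).
under eq_bigr => p _ do rewrite big_split /= !bigaddb_pred1.
rewrite big_split /= !bigaddb_pred1.
apply/eqP.
case: (ltngtP (s i) (s j)) => h //.
by move/val_inj/perm_inj: h => h; rewrite h eqxx in nij.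
Qed.

Lemma invb_perm1 n : invb (1%g : 'S_n) = false.
Proof.
rewrite /invb big1 // => p _; rewrite big1 // => q _; rewrite !perm1.
by apply/negbTE; rewrite negb_and; case: (ltnP p q) => h //=; rewrite -leqNgt ltnW.
Qed.

Lemma invb_tperm_gen n (a b : 'I_n) (s : 'S_n) :
  invb s = odd_perm s -> invb (tperm a b * s)%g = odd_perm (tperm a b * s)%g.
Proof.
wlog lab : a b / a <= b.
  move=> W; case: (leqP a b) => h; first exact: W.
  by rewrite tpermC; apply: W; rewrite ltnW.
move: lab; rewrite leq_eqVlt => /orP[/eqP/val_inj->|].
  by rewrite tperm1 mul1g.
move=> lab.
have [d hd] : exists d, val b = val a + d.+1 by exists (b - a.+1) => /=; lia.
elim: d a b hd {lab} s => [|d IH] a b hd s hs.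
  have nab : a != b by rewrite oeq; move: hd => /=; lia.
  rewrite invb_tperm_adj; last by move: hd => /=; lia.
  by rewrite odd_mul_tperm hs nab.
have ha1 : a.+1 < n by move: (ltn_ord b) hd => /=; lia.
pose a' : 'I_n := Ordinal ha1.
have E : tperm a b = (tperm a a' * tperm a' b * tperm a a')%g.
  rewrite -mulgA -[X in (X * _)%g]tpermV -/(conjg _ _) tpermJ tpermR tpermD //.
    by rewrite oeq /=; move: hd => /=; lia.
  by rewrite oeq /=; move: hd => /=; lia.
rewrite E -!mulgA.
have adj : val a' = (val a).+1 by [].
have naa' : a != a' by rewrite oeq /=; lia.
have h1 : invb (tperm a a' * s)%g = odd_perm (tperm a a' * s)%g.
  by rewrite invb_tperm_adj // odd_mul_tperm hs naa'.
have hd' : val b = val a' + d.+1 by move: hd => /=; lia.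
have h2 := IH a' b hd' _ h1.
by rewrite invb_tperm_adj // h2 !odd_mul_tperm naa'.
Qed.

Lemma invb_perm n (s : 'S_n) : invb s = odd_perm s.
Proof.
have [ts -> _] := prod_tpermP s.
elim: ts => [|t ts IH]; first by rewrite big_nil invb_perm1 odd_perm1.
by rewrite big_cons; apply: invb_tperm_gen.
Qed.


Definition goodsplit k m (r : 'I_k -> nat) (rb : 'I_m -> nat) : Prop :=
 [/\ (forall i j : 'I_k, i < j -> r i < r j), (forall i j : 'I_m, i < j -> rb i < rb j),
     (forall i, 0 < r i <= k + m), (forall j, 0 < rb j <= k + m) & (forall i j, r i != rb j)].

Definition mergef k m (r : 'I_k -> nat) (rb : 'I_m -> nat) (p : 'I_(k + m)) : 'I_(k + m) :=
  insubd p (match split p with inl i => (r i).-1 | inr j => (rb j).-1 end).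

Lemma split_l k m (i : 'I_k) : split (lshift m i) = inl i.
Proof. exact: (unsplitK (inl i)). Qed.
Lemma split_r k m (j : 'I_m) : split (rshift k j) = inr j.
Proof. exact: (unsplitK (inr j)). Qed.

Lemma mono_inj n (f : 'I_n -> nat) : (forall i j : 'I_n, i < j -> f i < f j) ->
  forall i j, f i = f j -> i = j.
Proof.
move=> hf i j e; apply/val_inj/eqP; case: (ltngtP i j) => // h.
  by have := hf _ _ h; rewrite e ltnn.
by have := hf _ _ h; rewrite e ltnn.
Qed.

Lemma mono_lt n (f : 'I_n -> nat) : (forall i j : 'I_n, i < j -> f i < f j) ->
  forall i j, (f i < f j) = (i < j).
Proof.
move=> hf i j; case: (ltnP i j) => h; first exact: hf.
case: (ltngtP i j) h => // [h|/val_inj ->] _; last by rewrite ltnn.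
by apply/negbTE; rewrite -leqNgt ltnW // hf.
Qed.


Lemma mergef_l k m r rb (i : 'I_k) : goodsplit r rb ->
  val (mergef r rb (lshift m i)) = (r i).-1.
Proof.
case=> _ _ h _ _; rewrite /mergef split_l val_insubd.
by have := h i; case: ifP => //; lia.
Qed.

Lemma mergef_r k m r rb (j : 'I_m) : goodsplit r rb ->
  val (mergef r rb (rshift k j)) = (rb j).-1.
Proof.
case=> _ _ _ h _; rewrite /mergef split_r val_insubd.
by have := h j; case: ifP => //; lia.
Qed.

Lemma mergef_inj k m r rb : goodsplit r rb -> injective (@mergef k m r rb).
Proof.
move=> G p q; have := G; case=> h1 h2 h3 h4 h5.
rewrite -(splitK p) -(splitK q).
case: (split p) => [i|j]; case: (split q) => [i'|j'] /= /(congr1 val);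
  rewrite ?mergef_l ?mergef_r //.
- have := h3 i; have := h3 i' => ? ? e.
  by rewrite (@mono_inj _ _ h1 i i') //; lia.
- have := h3 i; have := h4 j' => ? ? e.
  by have := h5 i j'; rewrite (_ : r i = rb j') ?eqxx //; lia.
- have := h4 j; have := h3 i' => ? ? e.
  by have := h5 i' j; rewrite (_ : r i' = rb j) ?eqxx //; lia.
- have := h4 j; have := h4 j' => ? ? e.
  by rewrite (@mono_inj _ _ h2 j j') //; lia.
Qed.

Definition invn n (g : 'I_n -> 'I_n) : nat :=
  \sum_(p < n) \sum_(q < n) ((p < q) && (g q < g p)).

Lemma sum_gt t m : \sum_(j < m) (t < j) = m - t.+1.
Proof.
elim: m => [|m IH]; first by rewrite big_ord0.
by rewrite big_ord_recr /= IH; case: (ltnP t m) => h /=; lia.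
Qed.

Lemma sum_ge t N : \sum_(x < N) (t <= x) = N - t.
Proof.
elim: N => [|N IH]; first by rewrite big_ord0.
by rewrite big_ord_recr /= IH; case: (leqP t N) => h /=; lia.
Qed.

Lemma invn_merge k m r rb (G : goodsplit r rb) :
  invn (@mergef k m r rb) = \sum_(i < k) \sum_(j < m) (rb j < r i).
Proof.
have := G; case=> h1 h2 h3 h4 h5.
rewrite /invn big_split_ord /= -[RHS]addn0; congr (_ + _).
  apply: eq_bigr => i _; rewrite big_split_ord /= -[RHS]add0n; congr (_ + _).
    rewrite big1 // => i' _; rewrite !mergef_l //.
    apply/eqP; rewrite eqb0 negb_and /=; case: (ltnP i i') => //= hii.
    have := h1 _ _ hii; have := h3 i; have := h3 i'; lia.
  apply: eq_bigr => j _; rewrite !mergef_l ?mergef_r //.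
  have := h3 i; have := h4 j; have := ltn_ord i; lia.
rewrite big1 // => j _; rewrite big_split_ord /= big1 ?add0n.
  rewrite big1 // => j' _; rewrite !mergef_r //.
  apply/eqP; rewrite eqb0 negb_and /=; case: (ltnP j j') => hjj; first (rewrite orbC /=; have := h2 _ _ hjj; lia); rewrite /=; lia.
move=> i _; have := ltn_ord i; lia.
Qed.

Lemma count_merge k m r rb (G : goodsplit r rb) (j : 'I_m) :
  \sum_(i < k) (rb j < r i) + rb j + (m - j.+1) = k + m.
Proof.
have := G; case=> h1 h2 h3 h4 h5.
have E : \sum_(x < k + m) (rb j <= x) = k + m - rb j by rewrite sum_ge.
rewrite (reindex_inj (mergef_inj G)) big_split_ord /= in E.
have E1 : \sum_(i < k) (rb j <= mergef r rb (lshift m i)) = \sum_(i < k) (rb j < r i).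
  apply: eq_bigr => i _; rewrite mergef_l //; have := h3 i; lia.
have E2 : \sum_(j' < m) (rb j <= mergef r rb (rshift k j')) = m - j.+1.
  rewrite -sum_gt; apply: eq_bigr => j' _; rewrite mergef_r // -(mono_lt h2).
  have := h4 j'; lia.
rewrite E1 E2 in E; have := h4 j; lia.
Qed.

Lemma invn_eq n (f g : 'I_n -> 'I_n) : f =1 g -> invn f = invn g.
Proof. by move=> e; rewrite /invn; apply: eq_bigr => p _; apply: eq_bigr => q _; rewrite !e. Qed.

Lemma invn_total k m r rb (G : goodsplit r rb) :
  invn (@mergef k m r rb) + \sum_(j < m) rb j + \sum_(j < m) (m - j.+1) = m * (k + m).
Proof.
rewrite invn_merge // exchange_big /= -!big_split /=.
rewrite (eq_bigr (fun _ => k + m)) ?sum_nat_const ?card_ord //.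
by move=> j _; rewrite count_merge.
Qed.



Definition adjb (a b : nat) : bool := (a == b.+1) || (b == a.+1).

Lemma adjbC a b : adjb a b = adjb b a.
Proof. by rewrite /adjb orbC. Qed.

Lemma forall_ordS n (P : pred 'I_n.+1) :
  [forall i, P i] = [forall i : 'I_n, P (widen_ord (leqnSn n) i)] && P ord_max.
Proof.
apply/forallP/andP => [H|[/forallP H1 H2] i]; first by split => //; apply/forallP => i.
case: (ltnP i n) => h.
  by have := H1 (Ordinal h); congr P; apply: val_inj.
by rewrite (_ : i = ord_max) //; apply: val_inj => /=; have := ltn_ord i; lia.
Qed.

Definition pathok K N (x y : nat) (p : {ffun 'I_N.+1 -> 'I_K.+1}) : bool :=
  [&& val (p ord0) == x, val (p ord_max) == y &
        [forall i : 'I_N,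
           (val (p (lift ord0 i)) == (val (p (widen_ord (leqnSn N) i))).+1)
        || (val (p (widen_ord (leqnSn N) i)) == (val (p (lift ord0 i))).+1)]].

Lemma CpathE K N x y : Cpath K N x y = \sum_(p : {ffun 'I_N.+1 -> 'I_K.+1}) @pathok K N x y p.
Proof.
rewrite /Cpath cardsE -sum1_card big_mkcond /=.
by apply: eq_bigr => p _.
Qed.

Definition extp K N (pt : {ffun 'I_N.+1 -> 'I_K.+1} * 'I_K.+1) : {ffun 'I_N.+2 -> 'I_K.+1} :=
  [ffun i : 'I_N.+2 => if (i : nat) < N.+1 then pt.1 (inord i) else pt.2].
Definition restp K N (q : {ffun 'I_N.+2 -> 'I_K.+1}) : {ffun 'I_N.+1 -> 'I_K.+1} * 'I_K.+1 :=
  ([ffun j : 'I_N.+1 => q (widen_ord (leqnSn _) j)], q ord_max).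

Lemma extpK K N : cancel (@extp K N) (@restp K N).
Proof.
move=> [p t]; rewrite /restp /extp; congr pair; last by rewrite ffunE /= ltnn.
apply/ffunP => j; rewrite !ffunE /= ltn_ord; congr (p _); apply: val_inj.
by rewrite /= inordK.
Qed.

Lemma restpK K N : cancel (@restp K N) (@extp K N).
Proof.
move=> q; apply/ffunP => i; rewrite /restp /extp !ffunE /=.
case: ifP => h; rewrite ?ffunE; congr (q _); apply: val_inj => /=.
  by rewrite inordK.
by have := ltn_ord i; move: h => /=; lia.
Qed.

Lemma extpE K N p t (i : 'I_N.+2) : @extp K N (p, t) i = if (i : nat) < N.+1 then p (inord i) else t.
Proof. by rewrite ffunE. Qed.

Lemma pathok_ext K N x y p t :
  @pathok K N.+1 x y (extp (p, t)) =
  [&& @pathok K N x (val (p ord_max)) p, val t == y & adjb (val t) (val (p ord_max))].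
Proof.
have e0 : (inord 0 : 'I_N.+1) = ord0 by apply: val_inj; rewrite /= inordK.
have eN : (inord N : 'I_N.+1) = ord_max by apply: val_inj; rewrite /= inordK.
rewrite /pathok forall_ordS !extpE /= e0 /bump leq0n add1n ltnn ltnSn eN eqxx /=.
have -> : [forall i : 'I_N, (val (extp (p, t) (lift ord0 (widen_ord (leqnSn N) i))) ==
    (val (extp (p, t) (widen_ord (leqnSn N.+1) (widen_ord (leqnSn N) i)))).+1)
  || (val (extp (p, t) (widen_ord (leqnSn N.+1) (widen_ord (leqnSn N) i))) ==
    (val (extp (p, t) (lift ord0 (widen_ord (leqnSn N) i)))).+1)]
  = [forall i : 'I_N,
           (val (p (lift ord0 i)) == (val (p (widen_ord (leqnSn N) i))).+1)
        || (val (p (widen_ord (leqnSn N) i)) == (val (p (lift ord0 i))).+1)].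
  apply: eq_forallb => i; rewrite !extpE /= /bump leq0n add1n.
  have h1 : i.+1 < N.+1 by rewrite ltnS ltn_ord.
  have h2 : (i : nat) < N.+1 by rewrite ltnW // ltnS ltn_ord.
  rewrite h1 h2.
  have -> : (inord i.+1 : 'I_N.+1) = lift ord0 i by apply: val_inj; rewrite /= inordK // lift0.
  have -> : (inord i : 'I_N.+1) = widen_ord (leqnSn N) i by apply: val_inj; rewrite /= inordK.
  by [].
rewrite /adjb; case: (val (p ord0) == x) => //=.
by case: [forall i, _] => /=; rewrite ?andbF // andbC.
Qed.


Lemma oeq' n (a b : 'I_n) : (a == b) = (val a == val b).
Proof. by []. Qed.

Lemma sum_pick n (c : 'I_n) (F : 'I_n -> nat) :
  \sum_(t : 'I_n) ((val t == val c) * F t) = F c.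
Proof.
rewrite (bigD1 c) //= eqxx mul1n big1 ?addn0 // => t /negPf.
by rewrite oeq' => ->.
Qed.

Lemma Cpath_rec K N x (y : 'I_K.+1) :
  Cpath K N.+1 x y = \sum_(t : 'I_K.+1) Cpath K N x t * adjb t y.
Proof.
rewrite CpathE (reindex (@extp K N)) /=; last first.
  by apply: onW_bij; exists (@restp K N); [exact: extpK | exact: restpK].
transitivity (\sum_(p : {ffun 'I_N.+1 -> 'I_K.+1}) \sum_(t : 'I_K.+1)
   @pathok K N.+1 x y (extp (p, t))).
  by rewrite pair_big; apply: eq_bigr => [[p t]] _.
under eq_bigr => t _ do rewrite CpathE big_distrl /=.
rewrite [RHS]exchange_big /=; apply: eq_bigr => p _.
under eq_bigr => t _ do rewrite pathok_ext.
transitivity (\sum_(t : 'I_K.+1) ((val t == val y) * (@pathok K N x (val (p ord_max)) p * adjb y (p ord_max)))).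
  apply: eq_bigr => t _; case: (val t =P val y) => [->|] /=; first by rewrite mul1n; case: (pathok _ _ _); case: (adjb _ _).
  by move=> _; rewrite andbF.
rewrite sum_pick.
transitivity (\sum_(t : 'I_K.+1) ((val t == val (p ord_max)) * (@pathok K N x (val (p ord_max)) p * adjb y (p ord_max)))).
  by rewrite sum_pick.
apply: eq_bigr => t _; rewrite adjbC.
case: (val t =P val (p ord_max)) => [e|ne] /=.
  by rewrite mul1n e.
rewrite /pathok; case: (val (p ord0) == x) => //=.
by move/eqP/negPf: ne; rewrite eq_sym => ->.
Qed.


Local Open Scope ring_scope.

Definition adjM K : 'M[rat]_K.+1 := \matrix_(a, b) (adjb a b)%:R.

Lemma Cpath0 K (x y : 'I_K.+1) : Cpath K 0 x y = (x == y).
Proof.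
rewrite CpathE (reindex (fun t : 'I_K.+1 => [ffun _ : 'I_1 => t])) /=; last first.
  apply: onW_bij; exists (fun p : {ffun 'I_1 -> 'I_K.+1} => p ord0) => [t|p]; first by rewrite ffunE.
  by apply/ffunP => i; rewrite ffunE (ord1 i).
rewrite (bigD1 x) //= big1 /pathok.
  rewrite !ffunE eqxx /= addn0.
  by rewrite (_ : [forall i : 'I_0, _] = true) ?andbT //; apply/forallP => [[]].
move=> t ne; rewrite !ffunE.
by move/negPf: ne; rewrite oeq' => ->.
Qed.

Lemma Cpath_pow K N (x y : 'I_K.+1) : (Cpath K N x y)%:R = (adjM K ^+ N) x y.
Proof.
elim: N x y => [|N IH] x y.
  by rewrite Cpath0 expr0 mxE.
rewrite Cpath_rec exprSr mxE natr_sum; apply: eq_bigr => t _.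
by rewrite natrM IH mxE.
Qed.

Definition wext n (f : 'I_n.+1 -> rat) (c : nat) : rat := if (c < n.+1)%N then f (inord c) else 0.

Lemma sum_pick_nat n (F : 'I_n.+1 -> rat) c :
  \sum_(x : 'I_n.+1) F x * ((x : nat) == c)%:R = wext F c.
Proof.
rewrite /wext; case: ifP => h.
  rewrite (bigD1 (inord c)) //= inordK // eqxx mulr1 big1 ?addr0 // => x ne.
  case: eqP => [e|]; last by rewrite mulr0.
  by case/eqP: ne; apply: val_inj; rewrite /= inordK // e.
rewrite big1 // => x _; case: eqP => [e|]; last by rewrite mulr0.
by move: h (ltn_ord x); rewrite e => ->.
Qed.

Lemma sum_adj n (F : 'I_n.+1 -> rat) (y : nat) :
  \sum_(x : 'I_n.+1) F x * (adjb x y)%:R = wext F y.+1 + (if y is y'.+1 then wext F y' else 0).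
Proof.
have E : forall x : 'I_n.+1, (adjb x y)%:R = ((x : nat) == y.+1)%:R + ((x : nat) == y.-1)%:R * (0 < y)%:R :> rat.
  move=> x; rewrite /adjb; case: y => [|y] /=.
    by rewrite (_ : (0 == x.+1)%N = false) // orbF mulr0 addr0.
  rewrite eqSS mulr1 [(y == _)%N]eq_sym.
  case: (nat_of_ord x =P y.+2) => [e|ne]; case: (nat_of_ord x =P y) => [e'|ne'] /=; rewrite ?addr0 ?add0r //; lia.
under eq_bigr => x _ do rewrite E mulrDr mulrA.
rewrite big_split /= sum_pick_nat -big_distrl /= sum_pick_nat.
by clear E; case: y => [|y] /=; rewrite ?mulr0 ?mulr1.
Qed.

Lemma adjM_unit K : odd K -> adjM K \in unitmx.
Proof.
move=> oK; rewrite unitmxE unitfE; apply/det0P => -[v nv0 vA].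
have eq : forall y, (y <= K)%N -> wext (v 0) y.+1 + (if y is y'.+1 then wext (v 0) y' else 0) = 0.
  move=> y hy; rewrite -sum_adj.
  transitivity ((v *m adjM K) 0 (inord y)); last by rewrite vA mxE.
  by rewrite mxE; apply: eq_bigr => x _; rewrite mxE inordK.
have wout : forall c, (K < c)%N -> wext (v 0) c = 0.
  by move=> c h; rewrite /wext; case: ifP => //; lia.
have odd0 : forall j, wext (v 0) j.*2.+1 = 0.
  elim=> [|j IH]; first by have := eq 0%N (leq0n _); rewrite addr0.
  case: (leqP j.*2.+2 K) => h; last by apply: wout; lia.
  by rewrite doubleS; have := eq _ h; rewrite /= IH addr0.
have ev0 : forall t, wext (v 0) (K.+1 - t.*2) = 0.
  elim=> [|t IH]; first by rewrite subn0 wout.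
  case: (leqP t.*2.+1 K) => h; last first.
    by rewrite (_ : (K.+1 - t.+1.*2 = K.+1 - t.*2)%N) //; move: oK h; lia.
  have := eq (K - t.*2)%N (leq_subr _ _).
  rewrite (_ : (K - t.*2 = (K - t.*2.+1).+1)%N); last lia.
  rewrite /= (_ : ((K - t.*2.+1).+2 = K.+1 - t.*2)%N); last lia.
  by rewrite IH add0r (_ : (K.+1 - t.+1.*2 = K - t.*2.+1)%N) //; lia.
apply: (negP nv0); apply/eqP/rowP => x; rewrite mxE.
have := ltn_ord x; case/boolP: (odd x) => ox hx.
  have := odd0 (x./2); rewrite /wext.
  rewrite (_ : (x./2.*2.+1 = x)%N); last by move: ox; lia.
  by rewrite hx inord_val.
have := ev0 ((K.+1 - x)./2); rewrite /wext.
rewrite (_ : (K.+1 - (K.+1 - x)./2.*2 = x)%N); last by move: ox oK hx; lia.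
by rewrite hx inord_val.
Qed.


Lemma jac (R : comNzRingType) k m (M N : 'M[R]_(k + m)) : M *m N = 1%:M ->
  \det (ulsubmx M) = \det M * \det (drsubmx N).
Proof.
move=> MN.
have E : M *m block_mx 1%:M (ursubmx N) 0 (drsubmx N) = block_mx (ulsubmx M) 0 (dlsubmx M) 1%:M.
  move: MN; rewrite -{1}(submxK M) -{1}(submxK N) mulmx_block (scalar_mx_block k m).
  move/eq_block_mx => [_ e12 _ e22].
  by rewrite -{1}(submxK M) mulmx_block e12 e22 !mulmx1 !mulmx0 !addr0.
have := congr1 determinant E.
by rewrite det_mulmx det_ublock det_lblock !det1 mulr1 mul1r => ->.
Qed.


Lemma pw_mx n (A Ai : 'M[rat]_n.+1) : Ai * A = 1 -> forall a b,
  Ai ^+ a * A ^+ b = if (a <= b)%N then A ^+ (b - a) else Ai ^+ (a - b).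
Proof.
move=> h; elim=> [|a IH] b; first by rewrite expr0 mul1r subn0.
case: b => [|b]; first by rewrite expr0 mulr1.
by rewrite exprSr exprS -mulrA (mulrA Ai) h mul1r IH.
Qed.

Lemma horner_mx_sum n (A : 'M[rat]_n.+1) p :
  horner_mx A p = \sum_(i < size p) p`_i *: A ^+ i.
Proof.
rewrite -{1}[p]coefK poly_def linear_sum; apply: eq_bigr => i _.
by rewrite linearZ rmorphXn /= horner_mx_X.
Qed.

Lemma inv_poly n (A : 'M[rat]_n.+1) : A \in unitmx ->
  exists c : nat -> rat, exists d, invmx A = \sum_(l < d) c l *: A ^+ l.
Proof.
move=> uA.
have CH := Cayley_Hamilton A; rewrite horner_mx_sum size_char_poly big_ord_recl /= expr0 in CH.
set chi := char_poly A in CH.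
have c0 : chi`_0 != 0.
  by rewrite /chi char_poly_det mulf_neq0 // expf_neq0 // oppr_eq0 oner_eq0.
exists (fun l : nat => - (chi`_0)^-1 * chi`_l.+1); exists n.+1.
have E : invmx A * ((chi`_0)%:A + \sum_(i < n.+1) chi`_(bump 0 i) *: A ^+ bump 0 i) = 0.
  by rewrite CH mulr0.
rewrite mulrDr big_distrr /= in E.
have S : \sum_(i < n.+1) invmx A * (chi`_(bump 0 i) *: A ^+ bump 0 i) = \sum_(i < n.+1) chi`_i.+1 *: A ^+ i.
  apply: eq_bigr => i _; rewrite -scalerAr /bump add1n exprS mulrA -mulmxE mulVmx // mulmxE mul1r.
  by [].
rewrite S in E.
move/eqP: E; rewrite mulr_algr addr_eq0 => /eqP E.
rewrite -[invmx A](scalerK c0) E scalerN -scaleNr scaler_sumr; apply: eq_bigr => l _.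
by rewrite scalerA.
Qed.

Lemma annih n (A W : 'M[rat]_n.+1) x y : A \in unitmx ->
  (forall j, (A ^+ j * W) x y = 0) -> forall N j, (A ^+ j * invmx A ^+ N * W) x y = 0.
Proof.
move=> uA h0; have [c [d E]] := inv_poly uA.
elim=> [|N IH] j; first by rewrite expr0 mulr1.
rewrite exprS {1}E mulr_suml mulr_sumr !mulr_suml summxE big1 // => l _.
by rewrite -scalerAl -scalerAr -scalerAl mxE mulrA -exprD IH mulr0.
Qed.

Lemma sum_widen0 n1 n2 (F : nat -> rat) : (n1 <= n2)%N ->
  (forall i, (n1 <= i < n2)%N -> F i = 0) -> \sum_(i < n2) F i = \sum_(i < n1) F i.
Proof.
move=> h hF; rewrite -!(big_mkord xpredT) (big_cat_nat (leq0n n1) h) /=.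
rewrite [X in _ + X]big1_seq ?addr0 // => i /andP[_]; rewrite mem_index_iota; exact: hF.
Qed.

Lemma sum_rev n (F : nat -> rat) : \sum_(i < n) F i = \sum_(i < n) F (n - i.+1)%N.
Proof. by rewrite -(big_mkord xpredT F) -(big_mkord xpredT (fun i => F (n - i.+1)%N)) big_nat_rev add0n. Qed.

Lemma sum_shift a b (F : nat -> rat) :
  \sum_(i < a + b) F i = \sum_(i < a) F i + \sum_(t < b) F (t + a)%N.
Proof.
rewrite -(big_mkord xpredT F) -(big_mkord xpredT F) -(big_mkord xpredT (fun t => F (t + a)%N)).
rewrite (big_cat_nat (leq0n a) (leq_addr b a)) /=; congr (_ + _).
by rewrite -{1}[a]add0n big_addn addKn.
Qed.

Lemma rec_uniq (a u v : nat -> rat) : a 0%N != 0 ->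
  (forall N, \sum_(i < N.+1) a i * u (N - i)%N = \sum_(i < N.+1) a i * v (N - i)%N) ->
  forall N, u N = v N.
Proof.
move=> a0 H; elim/ltn_ind => N IH.
have := H N; rewrite !big_ord_recl /= !subn0.
rewrite (eq_bigr (fun i : 'I_N => a (bump 0 i) * v (N - bump 0 i)%N)).
  by move/addIr/(mulfI a0).
move=> i _; rewrite IH //; rewrite /bump add1n; have := ltn_ord i; lia.
Qed.

Lemma Cneg_eq K (x y : 'I_K.+1) b : odd K -> is_Cneg K x y b ->
  forall N, (0 < N)%N -> b N = (invmx (adjM K) ^+ N) x y.
Proof.
move=> oK [p [q [hsz hq0 H1 H2]]].
set A := adjM K; have uA : A \in unitmx := adjM_unit oK.
set Ai := invmx A.
have AiA : Ai * A = 1 by rewrite /Ai -mulmxE mulVmx.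
set d := (size q).-1.
have qn0 : q != 0 by apply: contraNneq hq0 => ->; rewrite horner0.
have sq : size q = d.+1 by rewrite /d prednK // size_poly_gt0.
have spd : (size p <= d)%N by rewrite -ltnS -sq.
have qhi : forall i, (d < i)%N -> q`_i = 0 by move=> i h; rewrite nth_default // sq.
have phi : forall i, (d <= i)%N -> p`_i = 0 by move=> i h; rewrite nth_default // (leq_trans spd).
have H1' : forall N, \sum_(i < N.+1) q`_i * (A ^+ (N - i)) x y = p`_N.
  by move=> N; rewrite -H1; apply: eq_bigr => i _; rewrite Cpath_pow.
set W := \sum_(i < d.+1) q`_i *: A ^+ (d - i).
have claim1 : forall j, (A ^+ j * W) x y = 0.
  move=> j; rewrite mulr_sumr summxE.
  have := H1' (j + d)%N; rewrite (phi _ (leq_addl _ _)).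
  rewrite (@sum_widen0 d.+1 (j + d).+1 (fun i => q`_i * (A ^+ (j + d - i)) x y)).
  - move=> E; apply: (etrans _ E); apply: eq_bigr => i _.
    by rewrite -scalerAr mxE -exprD addnBA // -ltnS.
  - by rewrite ltnS leq_addl.
  - by move=> i /andP[h _]; rewrite qhi ?mul0r.
have claim2 : forall N, (Ai ^+ N * W) x y = 0.
  by move=> N; have := annih uA claim1 N 0; rewrite expr0 mul1r.
have ZE : forall N, (Ai ^+ N * W) x y =
    \sum_(i < d.+1) q`_i * (if (N <= d - i)%N then (A ^+ (d - i - N)) x y else (Ai ^+ (N - (d - i))) x y).
  move=> N; rewrite mulr_sumr summxE; apply: eq_bigr => i _.
  by rewrite -scalerAr mxE pw_mx //; case: ifP.
pose b' := fun N => if N is 0%N then 0 else (Ai ^+ N) x y.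
have H2' : forall N, \sum_(i < N.+1) revcoef d q i * b' (N - i)%N = - revcoef d p N.
  move=> N; have Z := claim2 N; rewrite ZE in Z.
  case: (leqP N d) => hN.
  - rewrite {2}/revcoef hN big_ord_recr /= subnn mulr0 addr0.
    rewrite (sum_rev N (fun i => revcoef d q i * b' (N - i)%N)).
    rewrite (_ : d.+1 = ((d - N).+1 + N)%N) in Z; last lia.
    rewrite (sum_shift (d - N).+1 N (fun i => q`_i * (if (N <= d - i)%N then (A ^+ (d - i - N)) x y
               else (Ai ^+ (N - (d - i))) x y))) /= in Z.
    have E1 : \sum_(i < (d - N).+1) q`_i * (if (N <= d - i)%N then (A ^+ (d - i - N)) x y
               else (Ai ^+ (N - (d - i))) x y) = p`_(d - N).
      rewrite -H1'; apply: eq_bigr => i _.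
      have hi := ltn_ord i.
      rewrite (_ : (N <= d - i)%N = true); last lia.
      by rewrite (_ : (d - i - N = d - N - i)%N) //; lia.
    move/eqP: Z; rewrite E1 addrC addr_eq0 => /eqP <-.
    apply: eq_bigr => t _; have ht := ltn_ord t.
    rewrite /revcoef (_ : (N - t.+1 <= d)%N = true); last lia.
    rewrite (_ : (N <= d - (t + (d - N).+1))%N = false); last lia.
    rewrite (_ : (d - (N - t.+1) = t + (d - N).+1)%N); last lia.
    rewrite (_ : (N - (N - t.+1) = t.+1)%N); last lia.
    by rewrite (_ : (N - (d - (t + (d - N).+1)) = t.+1)%N); last lia.
  - rewrite {2}/revcoef (_ : (N <= d)%N = false); last lia.
    rewrite oppr0; apply: (etrans _ Z).
    rewrite (@sum_widen0 d.+1 N.+1 (fun i => revcoef d q i * b' (N - i)%N)); last 2 first.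
    + lia.
    + by move=> i /andP[h _]; rewrite /revcoef (_ : (i <= d)%N = false) ?mul0r //; lia.
    rewrite (sum_rev d.+1 (fun i => q`_i * (if (N <= d - i)%N then (A ^+ (d - i - N)) x y
               else (Ai ^+ (N - (d - i))) x y))).
    apply: eq_bigr => i _; have hi := ltn_ord i.
    rewrite /revcoef (_ : (i <= d)%N = true); last lia.
    rewrite (_ : (d.+1 - i.+1 = d - i)%N); last lia.
    rewrite (_ : (N <= d - (d - i))%N = false); last lia.
    rewrite (_ : (N - (d - (d - i)) = N - i)%N); last lia.
    by rewrite /b' (_ : (N - i = (N - i).-1.+1)%N) //; lia.
have U := rec_uniq (a := revcoef d q) (u := b) (v := b').
move=> N hN; rewrite U.
- by case: N hN.
- by rewrite /revcoef leq0n subn0 -lead_coefE -/d lead_coef_eq0.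
- by move=> M; rewrite H2 H2'.
Qed.


Definition evo K L (a : 'I_L) : 'I_K.+1 := inord (a.*2).
Definition odo K L (a : 'I_L) : 'I_K.+1 := inord (a.*2.+1).

Lemma evoE K L (hKL : K.+1 = L.*2) (a : 'I_L) : (@evo K L a : nat) = a.*2.
Proof. by rewrite /evo inordK //; have := ltn_ord a; lia. Qed.
Lemma odoE K L (hKL : K.+1 = L.*2) (a : 'I_L) : (@odo K L a : nat) = a.*2.+1.
Proof. by rewrite /odo inordK //; have := ltn_ord a; lia. Qed.

Lemma sum_double n (G : nat -> rat) :
  \sum_(t < n.*2) G t = \sum_(a < n) (G a.*2 + G a.*2.+1).
Proof.
elim: n => [|n IH]; first by rewrite !big_ord0.
by rewrite doubleS !big_ord_recr /= IH addrA.
Qed.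

Lemma sum_split_eo K L (hKL : K.+1 = L.*2) (F : 'I_K.+1 -> rat) :
  \sum_(t : 'I_K.+1) F t = \sum_(a : 'I_L) (F (evo K a) + F (odo K a)).
Proof.
rewrite (eq_bigr (fun t : 'I_K.+1 => F (inord t))); last by move=> t _; rewrite inord_val.
by have := sum_double L (fun t => F (inord t)); rewrite -hKL => ->.
Qed.

Definition blk K L (M : 'M[rat]_K.+1) (f g : 'I_L -> 'I_K.+1) : 'M[rat]_L :=
  \matrix_(a, b) M (f a) (g b).

Lemma blk_mul K L (hKL : K.+1 = L.*2) (M N : 'M[rat]_K.+1) f g :
  blk (M * N) f g = blk M f (@evo K L) *m blk N (@evo K L) g + blk M f (@odo K L) *m blk N (@odo K L) g.
Proof.
apply/matrixP => a b; rewrite !mxE (sum_split_eo hKL) big_split /=.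
by congr (_ + _); apply: eq_bigr => c _; rewrite !mxE.
Qed.

Definition pmx K (b : bool) (M : 'M[rat]_K.+1) :=
  forall x y : 'I_K.+1, odd x (+) odd y = ~~ b -> M x y = 0.

Lemma pmx_mul K b1 b2 (M N : 'M[rat]_K.+1) : pmx b1 M -> pmx b2 N -> pmx (b1 (+) b2) (M * N).
Proof.
move=> hM hN x y hxy; rewrite -mulmxE mxE big1 // => t _.
case: (boolP (odd x (+) odd t == b1)) => [/eqP e1|n1].
  rewrite hN ?mulr0 //; move: hxy e1.
  by case: (odd x); case: (odd t); case: (odd y); case: (b1); case: (b2).
by rewrite hM ?mul0r //; move: n1; case: (odd x (+) odd t); case: (b1).
Qed.

Lemma pmx_adj K : pmx true (adjM K).
Proof.
move=> x y hxy; rewrite mxE /adjb.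
case: (nat_of_ord x =P y.+1) => [e|_]; first by move: hxy; rewrite e /=; case: (odd y).
case: (nat_of_ord y =P x.+1) => [e|_] //; by move: hxy; rewrite e /=; case: (odd x).
Qed.

Lemma pmx_pow K N : pmx (odd N) (adjM K ^+ N).
Proof.
elim: N => [|N IH].
  move=> x y /=; rewrite expr0 mxE; case: eqP => [->|] //; by case: (odd y).
by have := pmx_mul IH (@pmx_adj K); rewrite addbT exprSr.
Qed.

Lemma adjM_tr K : (adjM K)^T = adjM K.
Proof. by apply/matrixP => x y; rewrite !mxE /adjb orbC. Qed.

Lemma adjM_pow_tr K N : (adjM K ^+ N)^T = adjM K ^+ N.
Proof.
elim: N => [|N IH]; first by rewrite expr0 trmx1.
by rewrite {1}exprSr -mulmxE trmx_mul IH adjM_tr mulmxE -exprS.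
Qed.

Lemma blk0 K L b (M : 'M[rat]_K.+1) (f g : 'I_L -> 'I_K.+1) : pmx b M ->
  (forall a c, odd (f a) (+) odd (g c) = ~~ b) -> blk M f g = 0.
Proof. by move=> hM h; apply/matrixP => a c; rewrite !mxE hM. Qed.

Lemma blk_tr K L (M : 'M[rat]_K.+1) (f g : 'I_L -> 'I_K.+1) : M^T = M -> blk M g f = (blk M f g)^T.
Proof. by move=> hM; apply/matrixP => a c; rewrite !mxE -{1}hM mxE. Qed.

Lemma det_E K L (hKL : K.+1 = L.*2) : \det (blk (adjM K) (@evo K L) (@odo K L)) = 1.
Proof.
rewrite det_trig.
  rewrite big1 // => i _; rewrite !mxE evoE // odoE // /adjb.
  by rewrite eqxx orbT.
apply/is_trig_mxP => i j hij; rewrite !mxE evoE // odoE // /adjb.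
rewrite (_ : (i.*2 == j.*2.+2) = false); last lia.
by rewrite (_ : (j.*2.+1 == i.*2.+1) = false); last lia.
Qed.

Lemma blk1 K L (hKL : K.+1 = L.*2) : blk 1 (@evo K L) (@evo K L) = 1.
Proof.
apply/matrixP => a c; rewrite !mxE; congr ((_ : bool)%:R).
apply/eqP/eqP => [e|-> //]; apply: val_inj => /=.
have := congr1 (@nat_of_ord _) e; rewrite !evoE //; lia.
Qed.

Lemma det_blk_pow K L (hKL : K.+1 = L.*2) j :
  \det (blk (adjM K ^+ j.*2.+1) (@evo K L) (@odo K L)) = 1.
Proof.
have odd_ev : forall a : 'I_L, odd (@evo K L a) = false by move=> a; rewrite evoE // odd_double.
have odd_od : forall a : 'I_L, odd (@odo K L a) = true by move=> a; rewrite odoE //= odd_double.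
have Z1 : blk (adjM K) (@odo K L) (@odo K L) = 0.
  apply: (@blk0 K L true); first exact: pmx_adj.
  by move=> a c; rewrite !odd_od.
have Z2 : blk (adjM K) (@evo K L) (@evo K L) = 0.
  apply: (@blk0 K L true); first exact: pmx_adj.
  by move=> a c; rewrite !odd_ev.
have step1 : forall j, \det (blk (adjM K ^+ j.*2.+1) (@evo K L) (@odo K L)) =
    \det (blk (adjM K ^+ j.*2) (@evo K L) (@evo K L)).
  move=> i; rewrite exprSr (blk_mul hKL) Z1 mulmx0 addr0 det_mulmx det_E // mulr1.
  by [].
elim: j => [|j IH]; first by rewrite step1 expr0 blk1 // det1.
rewrite step1 doubleS exprSr (blk_mul hKL) Z2 mulmx0 add0r det_mulmx IH mul1r.
by rewrite (blk_tr _ _ (adjM_tr K)) det_tr det_E.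
Qed.


Lemma odd_invn n (g : 'I_n -> 'I_n) : odd (invn g) = invb g.
Proof.
rewrite /invn /invb (big_morph odd oddD (erefl (odd 0))); apply: eq_bigr => p _.
rewrite (big_morph odd oddD (erefl (odd 0))); apply: eq_bigr => q _.
by rewrite oddb.
Qed.

Lemma sign_pair k m r rb s sb (Gr : @goodsplit k m r rb) (Gs : @goodsplit k m s sb) :
  (-1) ^+ (odd_perm (perm (mergef_inj Gr))) * (-1) ^+ (odd_perm (perm (mergef_inj Gs)))
  = (-1) ^+ (\sum_(i < m) (rb i + sb i))%N :> rat.
Proof.
rewrite -signr_addb -[RHS]signr_odd; congr ((-1) ^+ (nat_of_bool _)).
rewrite -!invb_perm -!odd_invn (invn_eq (permE _)) (invn_eq (permE _)) -oddD.
have T1 := invn_total Gr; have T2 := invn_total Gs.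
move: T1 T2; rewrite big_split /=; move: (m * (k + m))%N (invn (mergef r rb)) (invn (mergef s sb)) (\sum_(i < m) rb i) (\sum_(i < m) sb i) (\sum_(j < m) (m - j.+1))%N => D X Y P Q C; lia.
Qed.

Lemma DBt K L (hKL : K.+1 = L.*2) N : odd N ->
  blk (invmx (adjM K) ^+ N) (@evo K L) (@odo K L) *m (blk (adjM K ^+ N) (@evo K L) (@odo K L))^T = 1.
Proof.
move=> oN.
have oK : odd K by move: hKL => /(congr1 odd) /=; rewrite odd_double; case: (odd K).
have uA := adjM_unit oK.
have TT : invmx (adjM K) ^+ N * adjM K ^+ N = 1.
  by rewrite pw_mx ?leqnn ?subnn ?expr0 // -mulmxE mulVmx.
have := congr1 (fun M => blk M (@evo K L) (@evo K L)) TT; rewrite /= (blk_mul hKL) blk1 //.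
have Z : blk (adjM K ^+ N) (@evo K L) (@evo K L) = 0.
  apply: (@blk0 K L (odd N)); first exact: pmx_pow.
  by move=> a c; rewrite !evoE // !odd_double oN.
rewrite Z mulmx0 add0r => <-; congr (_ *m _).
by rewrite -(blk_tr (@evo K L) (@odo K L) (adjM_pow_tr K N)).
Qed.

Unset Implicit Arguments.

Theorem theorem24 (n k m : nat) (hn : (1 <= n)%N) (hk : (1 <= k)%N) (hm : (1 <= m)%N)
  (Cneg : nat -> nat -> nat -> rat)
  (hCneg : forall r s : nat, (r <= 2 * k + 2 * m - 1)%N -> (s <= 2 * k + 2 * m - 1)%N ->
             is_Cneg (2 * k + 2 * m - 1) r s (Cneg r s))
  (r s : 'I_k -> nat) (rb sb : 'I_m -> nat)
  (hr : forall i j : 'I_k, (i < j)%N -> (r i < r j)%N)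
  (hs : forall i j : 'I_k, (i < j)%N -> (s i < s j)%N)
  (hr_range : forall i, (1 <= r i <= k + m)%N)
  (hs_range : forall i, (1 <= s i <= k + m)%N)
  (hrb : forall i j : 'I_m, (i < j)%N -> (rb i < rb j)%N)
  (hsb : forall i j : 'I_m, (i < j)%N -> (sb i < sb j)%N)
  (hrb_set : forall x : nat, (exists i, rb i = x) <->
                             ((1 <= x <= k + m)%N /\ ~ (exists i, r i = x)))
  (hsb_set : forall x : nat, (exists i, sb i = x) <->
                             ((1 <= x <= k + m)%N /\ ~ (exists i, s i = x))) :
  \det (\matrix_(i < k, j < k)
          ((Cpath (2 * k + 2 * m - 1) (2 * n - 1) (2 * r i - 2) (2 * s j - 1))%:R : rat))
  = (-1) ^+ (\sum_(i < m) (rb i + sb i))%N *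
    \det (\matrix_(i < m, j < m)
          Cneg (2 * rb i - 2)%N (2 * sb j - 1)%N (2 * n - 1)%N).
Proof.
set K := (2 * k + 2 * m - 1)%N.
have hKL : K.+1 = (k + m).*2 by rewrite /K; lia.
have oK : odd K by move: hKL => /(congr1 odd) /=; rewrite odd_double; case: (odd K).
have rbr : forall j, (1 <= rb j <= k + m)%N /\ ~ (exists i, r i = rb j).
  by move=> j; apply/hrb_set; exists j.
have sbr : forall j, (1 <= sb j <= k + m)%N /\ ~ (exists i, s i = sb j).
  by move=> j; apply/hsb_set; exists j.
have Gr : goodsplit r rb.
  split => // [j|i j]; first by case: (rbr j).
  by apply/eqP => e; case: (rbr j) => _; apply; exists i.
have Gs : goodsplit s sb.
  split => // [j|i j]; first by case: (sbr j).
  by apply/eqP => e; case: (sbr j) => _; apply; exists i.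
set hR := perm (mergef_inj Gr); set hS := perm (mergef_inj Gs).
set N := (2 * n - 1)%N.
have oN : odd N by rewrite /N; move: hn; lia.
have eN : N = (n.-1).*2.+1 by rewrite /N; move: hn; lia.
set T := adjM K ^+ N; set Ti := invmx (adjM K) ^+ N.
set B := blk T (@evo K (k + m)) (@odo K (k + m)).
set D := blk Ti (@evo K (k + m)) (@odo K (k + m)).
have dB : \det B = 1 by rewrite /B /T eN det_blk_pow.
have DB : D *m B^T = 1 := DBt hKL oN.
have BD : B *m D^T = 1%:M by rewrite -[B]trmxK -trmx_mul DB trmx1.
set M := \matrix_(p, q) B (hR p) (hS q).
set Nm := \matrix_(q, p) D (hR p) (hS q).
have MN : M *m Nm = 1%:M.
  apply/matrixP => p p'; rewrite !mxE.
  transitivity ((B *m D^T) (hR p) (hR p')); last by rewrite BD !mxE (inj_eq perm_inj).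
  rewrite mxE [RHS](reindex_perm hS); apply: eq_bigr => q _; by rewrite !mxE.
have J := jac MN.
have dM : \det M = (-1) ^+ (odd_perm hR) * (-1) ^+ (odd_perm hS).
  have -> : M = row_perm hR (col_perm hS B) by apply/matrixP => p q; rewrite !mxE.
  by rewrite row_permE col_permE !det_mulmx !det_perm odd_permV dB mul1r.
have L1 : \matrix_(i < k, j < k)
          ((Cpath K N (2 * r i - 2) (2 * s j - 1))%:R : rat) = ulsubmx M.
  apply/matrixP => i j; rewrite !mxE !permE.
  have e1 : (2 * r i - 2)%N = evo K (mergef r rb (lshift m i)).
    by rewrite evoE // mergef_l //; have := hr_range i; lia.
  have e2 : (2 * s j - 1)%N = odo K (mergef s sb (lshift m j)).
    by rewrite odoE // mergef_l //; have := hs_range j; lia.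
  by rewrite e1 e2 Cpath_pow.
have L2 : \matrix_(i < m, j < m) Cneg (2 * rb i - 2)%N (2 * sb j - 1)%N N = (drsubmx Nm)^T.
  apply/matrixP => i j; rewrite !mxE !permE.
  have e1 : (2 * rb i - 2)%N = evo K (mergef r rb (rshift k i)).
    by rewrite evoE // mergef_r //; case: (rbr i); lia.
  have e2 : (2 * sb j - 1)%N = odo K (mergef s sb (rshift k j)).
    by rewrite odoE // mergef_r //; case: (sbr j); lia.
  rewrite e1 e2; apply: (Cneg_eq oK).
  - by apply: hCneg; rewrite -ltnS ltn_ord.
  - by rewrite /N; move: hn; lia.
rewrite L1 L2 det_tr J.
by rewrite dM sign_pair.
Qed.
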